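(* Let $R$ be a complete discrete valuation ring with perfect residue field, fraction field $K$ and normalized valuation $v$. Let $E/K$ be an elliptic curve with additive reduction. Then $E$ has a minimal Weierstrass model over $R$, $$y^2+a_1xy+a_3y=x^3+a_2x^2+a_4x+a_6,$$ such that, writing $m=\min_{i\in\{1,2,3,4,6\}} \frac{v(a_i)}{i}$, $b_6=a_3^2+4a_6$ and $\delta=\operatorname{Disc}(x^3+a_2x^2+a_4x+a_6)$, the following holds according to the Kodaira type of $E$: - type $\mathrm{II}$: $m=\tfrac16$; - type $\mathrm{III}$: $m=\tfrac14$; - type $\mathrm{IV}$: $m=\tfrac13$ and $v(b_6)=2$; - type $\mathrm{I}_0^*$: $m=\tfrac12$ and $v(\delta)=6$; - type $\mathrm{I}_n^*$ with $n>0$: $m=\tfrac12$, $v(\delta)>6$ and $v(a_2^2-3a_4)=2$; - type $\mathrm{IV}^*$: $m=\tfrac23$ and $v(b_6)=4$; - type $\mathrm{III}^*$: $m=\tfrac34$; - type $\mathrm{II}^*$: $m=\tfrac56$. Conversely, if a Weierstrass equation $y^2+a_1xy+a_3y=x^3+a_2x^2+a_4x+a_6$ with $a_i\in K$ defining an elliptic curve $E/K$ satisfies one of the eight conditions listed above, then it is a minimal Weierstrass model of $E$ over $R$ and $E$ has the corresponding Kodaira type.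
   Context: Kodaira types are those of the special fibre of the minimal regular model (as determined by Tate's algorithm). A minimal Weierstrass model over $R$ is a Weierstrass equation with all $a_i\in R$ whose discriminant has minimal valuation among such models. If $a_i=0$ then $v(a_i)=\infty$. $\operatorname{Disc}$ denotes the discriminant of a polynomial. *)

(* Defs.v *)
From HB Require Import structures.
From mathcomp Require Import all_boot all_order all_algebra.
Set Implicit Arguments. Unset Strict Implicit. Unset Printing Implicit Defensive.
Import Order.TTheory GRing.Theory Num.Theory.
Local Open Scope ring_scope.

(* Discrete valuations.  A complete DVR R with fraction field K is      *)
(* encoded by K together with its normalized valuation v : K -> int     *)
(* (the value v 0 is irrelevant junk; v(0) = +oo is handled by vge).   *)
(* R = {x | vge v 0 x}.                                                 *)

Section Val.
Variables (K : fieldType) (v : K -> int).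

Definition vge (n : int) (x : K) : Prop := x = 0 \/ (n <= v x).
Definition vexact (n : int) (x : K) : Prop := x <> 0 /\ v x = n.

Definition normalized_discrete_valuation : Prop :=
  [/\ (forall x y : K, x <> 0 -> y <> 0 -> v (x * y) = v x + v y),
      (forall x y : K, x <> 0 -> y <> 0 -> x + y <> 0 ->
          Order.min (v x) (v y) <= v (x + y))
    & (exists pi : K, pi <> 0 /\ v pi = 1)].

Definition complete_valuation : Prop :=
  forall u : nat -> K,
    (forall N : int, exists M : nat, forall m n : nat,
        (M <= m)%N -> (M <= n)%N -> vge N (u m - u n)) ->
    exists l : K, forall N : int, exists M : nat, forall n : nat,
        (M <= n)%N -> vge N (u n - l).

(* the residue field k = R / (pi) is perfect: if k has characteristic p > 0
   then every element of k is a p-th power *)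
Definition perfect_residue_field : Prop :=
  forall p : nat, prime p -> vge 1 (p%:R : K) ->
    forall x : K, vge 0 x -> exists y : K, vge 0 y /\ vge 1 (y ^+ p - x).

End Val.

(* Weierstrass equations y^2 + a1 xy + a3 y = x^3 + a2 x^2 + a4 x + a6 *)

Record wcoef (K : Type) := WCoef { wa1 : K; wa2 : K; wa3 : K; wa4 : K; wa6 : K }.

Section Weierstrass.
Variable K : fieldType.
Implicit Types w : wcoef K.

Definition wb2 w := wa1 w ^+ 2 + 4%:R * wa2 w.
Definition wb4 w := 2%:R * wa4 w + wa1 w * wa3 w.
Definition wb6 w := wa3 w ^+ 2 + 4%:R * wa6 w.
Definition wb8 w := wa1 w ^+ 2 * wa6 w + 4%:R * wa2 w * wa6 w
                    - wa1 w * wa3 w * wa4 w + wa2 w * wa3 w ^+ 2 - wa4 w ^+ 2.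
Definition wc4 w := wb2 w ^+ 2 - 24%:R * wb4 w.
Definition wdisc w := - wb2 w ^+ 2 * wb8 w - 8%:R * wb4 w ^+ 3
                      - 27%:R * wb6 w ^+ 2 + 9%:R * wb2 w * wb4 w * wb6 w.

Definition disc_cubic (b c d : K) : K :=
  b ^+ 2 * c ^+ 2 - 4%:R * c ^+ 3 - 4%:R * b ^+ 3 * d - 27%:R * d ^+ 2
  + 18%:R * b * c * d.

Definition wdelta w := disc_cubic (wa2 w) (wa4 w) (wa6 w).

(* w' is obtained from w by the admissible change of variables
   x = u^2 x' + r, y = u^3 y' + s u^2 x' + t  (Silverman III.1.2) *)
Definition wiso w w' : Prop :=
  exists u r s t : K, u <> 0 /\
  [/\ u * wa1 w' = wa1 w + 2%:R * s,
      u ^+ 2 * wa2 w' = wa2 w - s * wa1 w + 3%:R * r - s ^+ 2,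
      u ^+ 3 * wa3 w' = wa3 w + r * wa1 w + 2%:R * t,
      u ^+ 4 * wa4 w' = wa4 w - s * wa3 w + 2%:R * r * wa2 w
                        - (t + r * s) * wa1 w + 3%:R * r ^+ 2 - 2%:R * s * t
    & u ^+ 6 * wa6 w' = wa6 w + r * wa4 w + r ^+ 2 * wa2 w + r ^+ 3
                        - t * wa3 w - t ^+ 2 - r * t * wa1 w].

Variable v : K -> int.

Definition integral_model w : Prop :=
  [/\ vge v 0 (wa1 w), vge v 0 (wa2 w), vge v 0 (wa3 w), vge v 0 (wa4 w)
    & vge v 0 (wa6 w)].

Definition minimal_model w0 w : Prop :=
  [/\ wiso w0 w, integral_model w &
      forall w', wiso w0 w' -> integral_model w' -> v (wdisc w) <= v (wdisc w')].

(* additive reduction: the reduction of a minimal model is singular with a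
   cusp, i.e. v(Delta) > 0 and v(c4) > 0 for a minimal model *)
Definition additive_reduction w0 : Prop :=
  exists w, [/\ minimal_model w0 w, 1 <= v (wdisc w) & vge v 1 (wc4 w)].

(* Kodaira types of additive reduction, via Tate's algorithm           *)
(* (Silverman, Advanced Topics, IV.9).  InStar_pos = I_n^* for some n>0 *)

Inductive additive_kodaira :=
  KII | KIII | KIV | KI0Star | KInStar_pos | KIVStar | KIIIStar | KIIStar.

Definition wF w (x : K) := x ^+ 3 + wa2 w * x ^+ 2 + wa4 w * x + wa6 w.
Definition wF' w (x : K) := 3%:R * x ^+ 2 + 2%:R * wa2 w * x + wa4 w.
Definition wG w (y : K) := y ^+ 2 + wa3 w * y - wa6 w.

(* singular point of the reduction at (0,0), additive (steps 2-3) *)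
Definition tate_A w : Prop :=
  [/\ vge v 1 (wa3 w), vge v 1 (wa4 w), vge v 1 (wa6 w) & vge v 1 (wb2 w)].
(* normalisation of step 6 *)
Definition tate_S w : Prop :=
  [/\ vge v 1 (wa1 w), vge v 1 (wa2 w), vge v 2 (wa3 w), vge v 2 (wa4 w)
    & vge v 3 (wa6 w)].
(* P(T) = T^3 + a2/pi T^2 + a4/pi^2 T + a6/pi^3 has a multiple root r mod pi
   (with rho = pi r):  pi | P(r), pi | P'(r) *)
Definition P_multiple_root w : Prop :=
  exists rho : K, [/\ vge v 1 rho, vge v 4 (wF w rho) & vge v 3 (wF' w rho)].
(* P(T) = (T - r)^3 mod pi *)
Definition P_triple_root w : Prop :=
  exists rho : K, [/\ vge v 1 rho, vge v 4 (wF w rho), vge v 3 (wF' w rho)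
                    & vge v 2 (wa2 w + 3%:R * rho)].
(* Q(Y) = Y^2 + a3/pi^2 Y - a6/pi^4 has a multiple root s mod pi
   (with sigma = pi^2 s) *)
Definition Q_multiple_root w : Prop :=
  exists sigma : K, [/\ vge v 2 sigma, vge v 5 (wG w sigma)
                      & vge v 3 (2%:R * sigma + wa3 w)].

Definition tate_cond (T : additive_kodaira) w : Prop :=
  match T with
  | KII => tate_A w /\ ~ vge v 2 (wa6 w)
  | KIII => [/\ tate_A w, vge v 2 (wa6 w) & ~ vge v 3 (wb8 w)]
  | KIV => [/\ tate_A w, vge v 2 (wa6 w), vge v 3 (wb8 w) & ~ vge v 3 (wb6 w)]
  | KI0Star => tate_S w /\ ~ P_multiple_root w
  | KInStar_pos => [/\ tate_S w, P_multiple_root w & ~ P_triple_root w]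
  | KIVStar => vge v 1 (wa1 w) /\ [/\ vge v 2 (wa2 w), vge v 2 (wa3 w),
                   vge v 3 (wa4 w), vge v 4 (wa6 w) & ~ Q_multiple_root w]
  | KIIIStar => vge v 1 (wa1 w) /\ [/\ vge v 2 (wa2 w), vge v 3 (wa3 w),
                    vge v 3 (wa4 w), vge v 5 (wa6 w) & ~ vge v 4 (wa4 w)]
  | KIIStar => vge v 1 (wa1 w) /\ [/\ vge v 2 (wa2 w), vge v 3 (wa3 w),
                   vge v 4 (wa4 w), vge v 5 (wa6 w) & ~ vge v 6 (wa6 w)]
  end.

(* E (given by w0) has Kodaira type T: Tate's algorithm, run on some integral
   model of E (with trivial coordinate changes), terminates at type T *)
Definition kodaira_type w0 (T : additive_kodaira) : Prop :=
  exists w, [/\ wiso w0 w, integral_model w & tate_cond T w].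

Definition vq (a : K) (i : nat) : rat := (v a)%:~R / i%:R.

(* m = min_{i in {1,2,3,4,6}} v(a_i)/i equals q (v(0) = +oo) *)
Definition m_is w (q : rat) : Prop :=
  let L := [:: (wa1 w, 1%N); (wa2 w, 2%N); (wa3 w, 3%N); (wa4 w, 4%N); (wa6 w, 6%N)] in
  (forall p, p \in L -> p.1 = 0 \/ q <= vq p.1 p.2) /\
  (exists p, p \in L /\ p.1 <> 0 /\ vq p.1 p.2 = q).

Definition paper_cond (T : additive_kodaira) w : Prop :=
  match T with
  | KII => m_is w (1%:Q / 6%:Q)
  | KIII => m_is w (1%:Q / 4%:Q)
  | KIV => m_is w (1%:Q / 3%:Q) /\ vexact v 2 (wb6 w)
  | KI0Star => m_is w (1%:Q / 2%:Q) /\ vexact v 6 (wdelta w)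
  | KInStar_pos => [/\ m_is w (1%:Q / 2%:Q), vge v 7 (wdelta w)
                     & vexact v 2 (wa2 w ^+ 2 - 3%:R * wa4 w)]
  | KIVStar => m_is w (2%:Q / 3%:Q) /\ vexact v 4 (wb6 w)
  | KIIIStar => m_is w (3%:Q / 4%:Q)
  | KIIStar => m_is w (5%:Q / 6%:Q)
  end.

End Weierstrass.

(* Main.v *)
Require Import Defs.
From HB Require Import structures.
From mathcomp Require Import all_boot all_order all_algebra.
From mathcomp Require Import zify ring lra.
From Stdlib Require Import Classical.
Set Implicit Arguments. Unset Strict Implicit. Unset Printing Implicit Defensive.
Import Order.TTheory GRing.Theory Num.Theory.
Local Open Scope ring_scope.

Lemma rat_ceil (q : rat) (i : nat) (k z : int) : (0 < i)%N ->
  (k - 1)%:~R < q * i%:R -> q * i%:R <= k%:~R ->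
  (q <= z%:~R / i%:R <-> k <= z).
Proof.
move=> hi h1 h2; rewrite ler_pdivlMr ?ltr0n //; split => h.
  rewrite leNgt; apply/negP => hz.
  have : z%:~R <= (k - 1)%:~R :> rat by rewrite ler_int; lia.
  move=> h3; have := le_lt_trans h3 h1; rewrite ltNge h /=; done.
apply: le_trans h2 _; by rewrite ler_int.
Qed.

Lemma rat_eq (q : rat) (i : nat) (k z : int) : (0 < i)%N ->
  (k - 1)%:~R < q * i%:R -> q * i%:R <= k%:~R ->
  (z%:~R / i%:R = q <-> (q * i%:R = k%:~R /\ z = k)).
Proof.
move=> hi h1 h2; split => [h|[h3 ->]].
  have hz : k <= z by rewrite -(rat_ceil z hi h1 h2) h.
  have e : z%:~R = q * i%:R by rewrite -h divfK // pnatr_eq0 -lt0n.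
  have : z%:~R <= k%:~R :> rat by rewrite e.
  rewrite ler_int => hz'; have ez : z = k by lia.
  by split => //; rewrite -e ez.
by rewrite -h3 mulfK // pnatr_eq0 -lt0n.
Qed.


Definition ratc (q : rat) (k1 k2 k3 k4 k6 : int) : Prop :=
  [/\ (k1 - 1)%:~R < q * 1%:R /\ q * 1%:R <= k1%:~R,
      (k2 - 1)%:~R < q * 2%:R /\ q * 2%:R <= k2%:~R,
      (k3 - 1)%:~R < q * 3%:R /\ q * 3%:R <= k3%:~R,
      (k4 - 1)%:~R < q * 4%:R /\ q * 4%:R <= k4%:~R &
      (k6 - 1)%:~R < q * 6%:R /\ q * 6%:R <= k6%:~R].

Lemma ratc16 : ratc (1%:Q / 6%:Q) 1 1 1 1 1. Proof. by rewrite /ratc; repeat split; lra. Qed.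
Lemma ratc14 : ratc (1%:Q / 4%:Q) 1 1 1 1 2. Proof. by rewrite /ratc; repeat split; lra. Qed.
Lemma ratc13 : ratc (1%:Q / 3%:Q) 1 1 1 2 2. Proof. by rewrite /ratc; repeat split; lra. Qed.
Lemma ratc12 : ratc (1%:Q / 2%:Q) 1 1 2 2 3. Proof. by rewrite /ratc; repeat split; lra. Qed.
Lemma ratc23 : ratc (2%:Q / 3%:Q) 1 2 2 3 4. Proof. by rewrite /ratc; repeat split; lra. Qed.
Lemma ratc34 : ratc (3%:Q / 4%:Q) 1 2 3 3 5. Proof. by rewrite /ratc; repeat split; lra. Qed.
Lemma ratc56 : ratc (5%:Q / 6%:Q) 1 2 3 4 5. Proof. by rewrite /ratc; repeat split; lra. Qed.

Section Iso.
Variable K : fieldType.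

Definition wtr (w : wcoef K) (r s t : K) : wcoef K :=
  WCoef (wa1 w + 2%:R * s)
        (wa2 w - s * wa1 w + 3%:R * r - s ^+ 2)
        (wa3 w + r * wa1 w + 2%:R * t)
        (wa4 w - s * wa3 w + 2%:R * r * wa2 w - (t + r * s) * wa1 w + 3%:R * r ^+ 2 - 2%:R * s * t)
        (wa6 w + r * wa4 w + r ^+ 2 * wa2 w + r ^+ 3 - t * wa3 w - t ^+ 2 - r * t * wa1 w).

Definition wsc (u : K) (w : wcoef K) : wcoef K :=
  WCoef (wa1 w / u) (wa2 w / u ^+ 2) (wa3 w / u ^+ 3) (wa4 w / u ^+ 4) (wa6 w / u ^+ 6).

Definition isoP (w w' : wcoef K) u r s t := u != 0 /\ w' = wsc u (wtr w r s t).

Lemma wisoE w w' : wiso w w' <-> exists u r s t, isoP w w' u r s t.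
Proof.
split.
  case=> u [r [s [t [u0 [h1 h2 h3 h4 h6]]]]]; exists u, r, s, t.
  have u0' : u != 0 by apply/eqP.
  split => //; case: w' h1 h2 h3 h4 h6 => b1 b2 b3 b4 b6 /= h1 h2 h3 h4 h6.
  rewrite /wsc /= -h1 -h2 -h3 -h4 -h6; congr WCoef; field; rewrite ?expf_neq0 //.
case=> u [r [s [t [u0 ->]]]]; exists u, r, s, t; split; first by apply/eqP.
by rewrite /wsc /=; split; field; rewrite ?expf_neq0.
Qed.

Lemma isoP_refl w : isoP w w 1 0 0 0.
Proof.
split; first exact: oner_neq0.
case: w => a1 a2 a3 a4 a6; rewrite /wsc /wtr /= !expr1n !divr1; congr WCoef; ring.
Qed.

Lemma isoP_sym w w' u r s t : isoP w w' u r s t ->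
  isoP w' w (u^-1) (- r / u ^+ 2) (- s / u) ((r * s - t) / u ^+ 3).
Proof.
case=> u0 ->; split; first by rewrite invr_eq0.
case: w => a1 a2 a3 a4 a6; rewrite /wsc /wtr /=; congr WCoef; field.
all: by rewrite ?u0 ?oner_neq0.
Qed.

Lemma isoP_trans w w' w'' u r s t u2 r2 s2 t2 : isoP w w' u r s t -> isoP w' w'' u2 r2 s2 t2 ->
  isoP w w'' (u * u2) (r + u ^+ 2 * r2) (s + u * s2) (t + u ^+ 3 * t2 + s * u ^+ 2 * r2).
Proof.
case=> u0 -> [u20 ->]; split; first by rewrite mulf_neq0.
case: w => a1 a2 a3 a4 a6; rewrite /wsc /wtr /=; congr WCoef; field.
all: by rewrite ?u0 ?u20 ?oner_neq0 ?mulf_neq0.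
Qed.

Lemma isoP_disc w w' u r s t : isoP w w' u r s t -> wdisc w = u ^+ 12 * wdisc w'.
Proof.
case=> u0 ->; case: w => a1 a2 a3 a4 a6.
rewrite /wdisc /wb2 /wb4 /wb6 /wb8 /wsc /wtr /=; field; rewrite ?expf_neq0 //.
Qed.
End Iso.

Section Val.
Variables (K : fieldType) (v : K -> int).
Hypothesis Hv : normalized_discrete_valuation v.

Lemma vM x y : x != 0 -> y != 0 -> v (x * y) = v x + v y.
Proof. by case: Hv => H _ _ hx hy; apply: H; apply/eqP. Qed.

Lemma v1 : v 1 = 0.
Proof.
have h : v 1 = v 1 + v 1 by rewrite -vM ?oner_neq0 // mulr1.
lia.
Qed.

Lemma vN1 : v (-1) = 0.
Proof.
have h1 : (-1 : K) != 0 by rewrite oppr_eq0 oner_neq0.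
have h : v 1 = v (-1) + v (-1) by rewrite -vM // mulrNN mulr1.
rewrite v1 in h; lia.
Qed.

Lemma vN x : v (- x) = v x.
Proof.
have [->|hx] := eqVneq x 0; first by rewrite oppr0.
have h1 : (-1 : K) != 0 by rewrite oppr_eq0 oner_neq0.
by rewrite -mulN1r vM // vN1 add0r.
Qed.

Lemma vX x n : x != 0 -> v (x ^+ n) = (v x) * n%:Z.
Proof.
move=> hx; elim: n => [|n IH]; first by rewrite expr0 v1 mulr0.
rewrite exprS vM ?expf_neq0 // IH. lia.
Qed.

Lemma vge_le (m n : int) x : m <= n -> vge v n x -> vge v m x.
Proof. move=> hmn [->|h]; [by left | right; lia]. Qed.

Lemma vge0 n : vge v n 0. Proof. by left. Qed.

Lemma vge_add n x y : vge v n x -> vge v n y -> vge v n (x + y).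
Proof.
case=> [->|hx]; first by rewrite add0r.
case=> [->|hy]; first by rewrite addr0; right.
have [h0|h0] := eqVneq (x + y) 0; first by left.
have [->|x0] := eqVneq x 0; first by rewrite add0r; right.
have [->|y0] := eqVneq y 0; first by rewrite addr0; right.
right; case: Hv => _ H _.
have nx : x <> 0 by apply/eqP.
have ny : y <> 0 by apply/eqP.
have nxy : x + y <> 0 by apply/eqP.
have := H x y nx ny nxy.
move=> h; apply: le_trans h; rewrite le_min hx hy //.
Qed.

Lemma vge_opp n x : vge v n x -> vge v n (- x).
Proof. by case=> [->|h]; [rewrite oppr0; left | right; rewrite vN]. Qed.

Lemma vge_mul a b x y : vge v a x -> vge v b y -> vge v (a + b) (x * y).
Proof.
case=> [->|hx]; first by rewrite mul0r; left.
case=> [->|hy]; first by rewrite mulr0; left.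
have [->|x0] := eqVneq x 0; first by rewrite mul0r; left.
have [->|y0] := eqVneq y 0; first by rewrite mulr0; left.
right; rewrite vM //; lia.
Qed.

Lemma vge_addm a b x y : vge v a x -> vge v b y -> vge v (Order.min a b) (x + y).
Proof.
move=> hx hy; apply: vge_add; apply: vge_le; try eassumption; by rewrite ge_min lexx ?orbT.
Qed.

Lemma vge_one : vge v 0 1.
Proof. by right; rewrite v1. Qed.

Lemma vge_nat n : vge v 0 (n%:R : K).
Proof.
elim: n => [|n IH]; first by left.
by rewrite mulrS; apply: vge_add => //; apply: vge_one.
Qed.

Lemma vge_exp a x n : vge v a x -> vge v (a * n%:Z) (x ^+ n).
Proof.
move=> h; elim: n => [|n IH]; first by rewrite expr0 mulr0; apply: vge_one.
rewrite exprS; have -> : a * (n.+1)%:Z = a + a * n%:Z by lia.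
exact: vge_mul.
Qed.

Lemma vge_root k m x n : (0 < n)%N -> (m - 1) * n%:Z < k -> vge v k (x ^+ n) -> vge v m x.
Proof.
move=> hn hk [h|h].
  by left; apply/eqP; move: (expf_eq0 x n); rewrite h eqxx hn /=.
have [->|x0] := eqVneq x 0; first by left.
right; rewrite vX // in h; nia.
Qed.

Lemma not_vge1_1 : ~ vge v 1 1.
Proof. by rewrite /vge v1 => -[/eqP|]; rewrite ?oner_eq0. Qed.

Lemma unit_ne0 c : ~ vge v 1 c -> c != 0.
Proof. by move=> h; apply/eqP => c0; apply: h; left. Qed.

Lemma unit_v0 c : vge v 0 c -> ~ vge v 1 c -> v c = 0.
Proof.
move=> [h|h] h1; first by case: h1; left.
have : ~ (1 <= v c) by move=> h2; apply: h1; right.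
lia.
Qed.

Lemma vge_unitl n c x : vge v 0 c -> ~ vge v 1 c -> vge v n (c * x) -> vge v n x.
Proof.
move=> h0 h1 [h|h].
  by left; move/eqP: h; rewrite mulf_eq0 (negbTE (unit_ne0 h1)) /= => /eqP.
have [->|x0] := eqVneq x 0; first by left.
by right; move: h; rewrite vM ?(unit_ne0 h1) // (unit_v0 h0 h1) add0r.
Qed.

Lemma vge_unit_mul n c x : vge v 0 c -> ~ vge v 1 c -> vge v n x -> vge v n (c * x).
Proof. move=> h0 h1 h; have := vge_mul h0 h; by rewrite add0r. Qed.

Lemma vge_inv_unit c : vge v 0 c -> ~ vge v 1 c -> vge v 0 (c^-1).
Proof.
move=> h0 h1; right; have c0 := unit_ne0 h1.
have h : v (c * c^-1) = v c + v (c^-1) by rewrite vM // invr_eq0.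
rewrite mulfV // v1 unit_v0 // in h; lia.
Qed.

Lemma vge_unit_inv c : vge v 0 c -> ~ vge v 1 c -> ~ vge v 1 (c^-1).
Proof.
move=> h0 h1 h2; apply: not_vge1_1.
have c0 := unit_ne0 h1.
by have := vge_mul h0 h2; rewrite add0r mulfV.
Qed.

Lemma vge_unit_mulr c d : vge v 0 c -> ~ vge v 1 c -> vge v 0 d -> ~ vge v 1 d -> ~ vge v 1 (c * d).
Proof.
move=> h0 h1 g0 g1 h; apply: g1.
by have := vge_mul (vge_inv_unit h0 h1) h; rewrite add0r mulrA mulVf ?(unit_ne0 h1) // mul1r.
Qed.

Lemma char23 : vge v 1 (3%:R : K) -> ~ vge v 1 (2%:R : K).
Proof.
move=> h3 h2; apply: not_vge1_1.
have -> : (1 : K) = 3%:R - 2%:R by rewrite -natrB.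
exact: vge_add h3 (vge_opp h2).
Qed.

Lemma vexact_not n x : vexact v n x -> ~ vge v (n + 1) x.
Proof. case=> x0 hx [h|h]; [exact: x0 h | lia]. Qed.

Lemma vexact_intro n x : vge v n x -> ~ vge v (n + 1) x -> vexact v n x.
Proof.
case=> [h|h] hn; first by case: hn; left.
split; first by move=> x0; apply: hn; left.
have : ~ (n + 1 <= v x) by move=> h2; apply: hn; right.
lia.
Qed.

Lemma vexact_vge n x : vexact v n x -> vge v n x.
Proof. by case=> _ h; right; rewrite h. Qed.


Ltac vatom := multimatch goal with
 | H : vge _ _ ?x |- vge _ _ ?x => exact H
 | |- vge _ _ (_%:R) => apply: vge_nat
 | |- vge _ _ 1 => apply: vge_one
 end.

Ltac vhyp := multimatch goal with
 | H : vge _ _ ?x |- vge _ _ ?x => exact H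
 end.

Ltac vterm := vhyp + lazymatch goal with
 | |- vge _ _ (_ * _) => eapply vge_mul; [vterm | vterm]
 | |- vge _ _ (_ ^+ _) => eapply vge_exp; vterm
 | |- vge _ _ (- _) => eapply vge_opp; vterm
 | |- vge _ _ (_ + _) => eapply vge_addm; [vterm | vterm]
 | |- vge _ _ (_%:R) => apply: vge_nat
 | |- vge _ _ 1 => apply: vge_one
 end.

Ltac vsolve := first
 [ eapply vge_le; [ | vhyp ]; lia
 | lazymatch goal with
   | |- vge _ _ (_ + _) => apply: vge_add; vsolve
   | |- vge _ _ (- _) => apply: vge_opp; vsolve
   | _ => eapply vge_le; [ | vterm ]; lia
   end ].


Definition bnds (k : int * int * int * int * int) (w : wcoef K) : Prop :=
  let: (k1, k2, k3, k4, k6) := k in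
  [/\ vge v k1 (wa1 w), vge v k2 (wa2 w), vge v k3 (wa3 w), vge v k4 (wa4 w) & vge v k6 (wa6 w)].

Lemma bnds_le (k1 k2 k3 k4 k6 l1 l2 l3 l4 l6 : int) w :
  (k1 <= l1) && (k2 <= l2) && (k3 <= l3) && (k4 <= l4) && (k6 <= l6) ->
  bnds (l1,l2,l3,l4,l6) w -> bnds (k1,k2,k3,k4,k6) w.
Proof.
move=> /andP[/andP[/andP[/andP[h1 h2] h3] h4] h6] [] *; split;
  by apply: vge_le; eassumption.
Qed.

Lemma strict_base a1 a2 a3 a4 a6 r s t :
  vge v 1 a1 -> vge v 1 a2 -> vge v 1 a3 -> vge v 1 a4 -> vge v 1 a6 ->
  vge v 0 r -> vge v 0 s -> vge v 0 t ->
  bnds (1,1,1,1,1) (wtr (WCoef a1 a2 a3 a4 a6) r s t) ->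
  [/\ vge v 1 r, vge v 1 s & vge v 1 t].
Proof.
move=> ha1 ha2 ha3 ha4 ha6 hr hs ht [] /= H1 H2 H3 H4 H6.
have h2t : vge v 1 (2%:R * t).
  have -> : 2%:R * t = (a3 + r * a1 + 2%:R * t) - a3 - r * a1 by ring.
  vsolve.
have h3r : vge v 1 (3%:R * r ^+ 2).
  have -> : 3%:R * r ^+ 2 = (a4 - s * a3 + 2%:R * r * a2 - (t + r * s) * a1 + 3%:R * r ^+ 2 - 2%:R * s * t)
     - a4 + s * a3 - 2%:R * r * a2 + t * a1 + r * s * a1 + s * (2%:R * t) by ring.
  vsolve.
have h6 : vge v 1 (r ^+ 3 - t ^+ 2).
  have -> : r ^+ 3 - t ^+ 2 = (a6 + r * a4 + r ^+ 2 * a2 + r ^+ 3 - t * a3 - t ^+ 2 - r * t * a1)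
     - a6 - r * a4 - r ^+ 2 * a2 + t * a3 + r * t * a1 by ring.
  vsolve.
have [hrt hr1] : vge v 1 t /\ vge v 1 r.
  have [c3|c3] := (classic (vge v 1 (3%:R : K))).
    have ht1 : vge v 1 t by apply: (vge_unitl (vge_nat 2) (char23 c3)).
    split => //; apply: (@vge_root 1 1 r 3) => //.
    have -> : r ^+ 3 = (r ^+ 3 - t ^+ 2) + t ^+ 2 by ring.
    vsolve.
  have hr1 : vge v 1 r.
    apply: (@vge_root 1 1 r 2) => //.
    exact: (vge_unitl (vge_nat 3) c3).
  split => //; apply: (@vge_root 1 1 t 2) => //.
  have -> : t ^+ 2 = r ^+ 3 - (r ^+ 3 - t ^+ 2) by ring.
  vsolve.
split => //; apply: (@vge_root 1 1 s 2) => //.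
have -> : s ^+ 2 = a2 - s * a1 + 3%:R * r - (a2 - s * a1 + 3%:R * r - s ^+ 2) by ring.
vsolve.
Qed.


Ltac vroot m n k := apply: (@vge_root (k%:Z) (m%:Z) _ n); [done | lia | ].

Lemma rge2 a1 a2 a3 a4 a6 r s t :
  vge v 1 a1 -> vge v 2 a2 -> vge v 2 a3 -> vge v 3 a4 -> vge v 4 a6 ->
  vge v 1 r -> vge v 1 s -> vge v 1 t ->
  vge v 2 (a2 - s * a1 + 3%:R * r - s ^+ 2) ->
  vge v 2 (a3 + r * a1 + 2%:R * t) ->
  vge v 4 (a6 + r * a4 + r ^+ 2 * a2 + r ^+ 3 - t * a3 - t ^+ 2 - r * t * a1) ->
  vge v 2 r.
Proof.
move=> ha1 ha2 ha3 ha4 ha6 hr hs ht H2 H3 H6.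
have [c3|c3] := (classic (vge v 1 (3%:R : K))).
  have ht2 : vge v 2 t.
    apply: (vge_unitl (vge_nat 2) (char23 c3)).
    have -> : 2%:R * t = (a3 + r * a1 + 2%:R * t) - a3 - r * a1 by ring.
    vsolve.
  vroot 2%N 3%N 4%N.
  have -> : r ^+ 3 = (a6 + r * a4 + r ^+ 2 * a2 + r ^+ 3 - t * a3 - t ^+ 2 - r * t * a1)
      - a6 - r * a4 - r ^+ 2 * a2 + t * a3 + t ^+ 2 + r * t * a1 by ring.
  vsolve.
apply: (vge_unitl (vge_nat 3) c3).
have -> : 3%:R * r = (a2 - s * a1 + 3%:R * r - s ^+ 2) - a2 + s * a1 + s ^+ 2 by ring.
vsolve.
Qed.

Lemma strict_II a1 a2 a3 a4 a6 r s t :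
  bnds (1,1,1,1,1) (WCoef a1 a2 a3 a4 a6) -> vexact v 1 a6 ->
  vge v 0 r -> vge v 0 s -> vge v 0 t ->
  bnds (1,1,1,1,2) (wtr (WCoef a1 a2 a3 a4 a6) r s t) -> False.
Proof.
move=> Ha he hr hs ht Hb; case: (Ha) => /= ha1 ha2 ha3 ha4 ha6.
have [hr1 hs1 ht1] : [/\ vge v 1 r, vge v 1 s & vge v 1 t].
  by apply: (strict_base ha1 ha2 ha3 ha4 ha6 hr hs ht); apply: (bnds_le _ Hb).
case: Hb => /= H1 H2 H3 H4 H6.
apply: (vexact_not he).
have -> : a6 = (a6 + r * a4 + r ^+ 2 * a2 + r ^+ 3 - t * a3 - t ^+ 2 - r * t * a1)
   - r * a4 - r ^+ 2 * a2 - r ^+ 3 + t * a3 + t ^+ 2 + r * t * a1 by ring.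
vsolve.
Qed.

Lemma strict_III a1 a2 a3 a4 a6 r s t :
  bnds (1,1,1,1,2) (WCoef a1 a2 a3 a4 a6) -> vexact v 1 a4 ->
  vge v 0 r -> vge v 0 s -> vge v 0 t ->
  bnds (1,1,1,2,2) (wtr (WCoef a1 a2 a3 a4 a6) r s t) -> False.
Proof.
move=> Ha he hr hs ht Hb; case: (Ha) => /= ha1 ha2 ha3 ha4 ha6.
have [hr1 hs1 ht1] : [/\ vge v 1 r, vge v 1 s & vge v 1 t].
  apply: (strict_base (vge_le _ ha1) (vge_le _ ha2) (vge_le _ ha3) (vge_le _ ha4) (vge_le _ ha6) hr hs ht) => //.
  by apply: (bnds_le _ Hb).
case: Hb => /= H1 H2 H3 H4 H6.
apply: (vexact_not he).
have -> : a4 = (a4 - s * a3 + 2%:R * r * a2 - (t + r * s) * a1 + 3%:R * r ^+ 2 - 2%:R * s * t) + s * a3 - 2%:R * r * a2 + t * a1 + r * s * a1 - 3%:R * r ^+ 2 + 2%:R * s * t by ring.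
vsolve.
Qed.

Lemma strict_IV a1 a2 a3 a4 a6 r s t :
  bnds (1,1,1,2,2) (WCoef a1 a2 a3 a4 a6) -> vexact v 2 (wb6 (WCoef a1 a2 a3 a4 a6)) ->
  vge v 0 r -> vge v 0 s -> vge v 0 t ->
  bnds (1,1,2,2,3) (wtr (WCoef a1 a2 a3 a4 a6) r s t) -> False.
Proof.
move=> Ha he hr hs ht Hb; case: (Ha) => /= ha1 ha2 ha3 ha4 ha6.
have [hr1 hs1 ht1] : [/\ vge v 1 r, vge v 1 s & vge v 1 t].
  apply: (strict_base (vge_le _ ha1) (vge_le _ ha2) (vge_le _ ha3) (vge_le _ ha4) (vge_le _ ha6) hr hs ht) => //.
  by apply: (bnds_le _ Hb).
case: Hb => /= H1 H2 H3 H4 H6.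
apply: (vexact_not he); rewrite /wb6 /=.
have -> : a3 ^+ 2 + 4%:R * a6 = (a3 + r * a1 + 2%:R * t) ^+ 2 + 4%:R * (a6 + r * a4 + r ^+ 2 * a2 + r ^+ 3 - t * a3 - t ^+ 2 - r * t * a1) - 4%:R * r * a4 - 2%:R * r * a1 * a3
   - r ^+ 2 * a1 ^+ 2 - 4%:R * r ^+ 2 * a2 - 4%:R * r ^+ 3 by ring.
vsolve.
Qed.

Lemma strict_I0 a1 a2 a3 a4 a6 r s t :
  bnds (1,1,2,2,3) (WCoef a1 a2 a3 a4 a6) -> vexact v 6 (wdelta (WCoef a1 a2 a3 a4 a6)) ->
  vge v 0 r -> vge v 0 s -> vge v 0 t ->
  bnds (1,2,2,3,4) (wtr (WCoef a1 a2 a3 a4 a6) r s t) -> False.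
Proof.
move=> Ha he hr hs ht Hb; case: (Ha) => /= ha1 ha2 ha3 ha4 ha6.
have [hr1 hs1 ht1] : [/\ vge v 1 r, vge v 1 s & vge v 1 t].
  apply: (strict_base (vge_le _ ha1) (vge_le _ ha2) (vge_le _ ha3) (vge_le _ ha4) (vge_le _ ha6) hr hs ht) => //.
  by apply: (bnds_le _ Hb).
case: Hb => /= H1 H2 H3 H4 H6.
have ht2 : vge v 2 t.
  vroot 2%N 2%N 3%N.
  have -> : t ^+ 2 = a6 + r * a4 + r ^+ 2 * a2 + r ^+ 3 - t * a3 - r * t * a1 - (a6 + r * a4 + r ^+ 2 * a2 + r ^+ 3 - t * a3 - t ^+ 2 - r * t * a1) by ring.
  vsolve.
have hB2 : vge v 2 (a2 + 3%:R * r).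
  have -> : a2 + 3%:R * r = (a2 - s * a1 + 3%:R * r - s ^+ 2) + s * a1 + s ^+ 2 by ring.
  vsolve.
have hB4 : vge v 3 (a4 + 2%:R * r * a2 + 3%:R * r ^+ 2).
  have -> : a4 + 2%:R * r * a2 + 3%:R * r ^+ 2 = (a4 - s * a3 + 2%:R * r * a2 - (t + r * s) * a1 + 3%:R * r ^+ 2 - 2%:R * s * t) + s * a3 + t * a1 + r * s * a1 + 2%:R * s * t by ring.
  vsolve.
have hB6 : vge v 4 (a6 + r * a4 + r ^+ 2 * a2 + r ^+ 3).
  have -> : a6 + r * a4 + r ^+ 2 * a2 + r ^+ 3 = (a6 + r * a4 + r ^+ 2 * a2 + r ^+ 3 - t * a3 - t ^+ 2 - r * t * a1) + t * a3 + t ^+ 2 + r * t * a1 by ring.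
  vsolve.
apply: (vexact_not he); rewrite /wdelta /=.
have -> : disc_cubic a2 a4 a6 = disc_cubic (a2 + 3%:R * r) (a4 + 2%:R * r * a2 + 3%:R * r ^+ 2)
   (a6 + r * a4 + r ^+ 2 * a2 + r ^+ 3) by rewrite /disc_cubic; ring.
rewrite /disc_cubic; vsolve.
Qed.

Lemma strict_In a1 a2 a3 a4 a6 r s t :
  bnds (1,1,2,2,3) (WCoef a1 a2 a3 a4 a6) -> vexact v 2 (a2 ^+ 2 - 3%:R * a4) ->
  vge v 0 r -> vge v 0 s -> vge v 0 t ->
  bnds (1,2,2,3,4) (wtr (WCoef a1 a2 a3 a4 a6) r s t) -> False.
Proof.
move=> Ha he hr hs ht Hb; case: (Ha) => /= ha1 ha2 ha3 ha4 ha6.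
have [hr1 hs1 ht1] : [/\ vge v 1 r, vge v 1 s & vge v 1 t].
  apply: (strict_base (vge_le _ ha1) (vge_le _ ha2) (vge_le _ ha3) (vge_le _ ha4) (vge_le _ ha6) hr hs ht) => //.
  by apply: (bnds_le _ Hb).
case: Hb => /= H1 H2 H3 H4 H6.
have ht2 : vge v 2 t.
  vroot 2%N 2%N 3%N.
  have -> : t ^+ 2 = a6 + r * a4 + r ^+ 2 * a2 + r ^+ 3 - t * a3 - r * t * a1 - (a6 + r * a4 + r ^+ 2 * a2 + r ^+ 3 - t * a3 - t ^+ 2 - r * t * a1) by ring.
  vsolve.
have hB2 : vge v 2 (a2 + 3%:R * r).
  have -> : a2 + 3%:R * r = (a2 - s * a1 + 3%:R * r - s ^+ 2) + s * a1 + s ^+ 2 by ring.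
  vsolve.
have hB4 : vge v 3 (a4 + 2%:R * r * a2 + 3%:R * r ^+ 2).
  have -> : a4 + 2%:R * r * a2 + 3%:R * r ^+ 2 = (a4 - s * a3 + 2%:R * r * a2 - (t + r * s) * a1 + 3%:R * r ^+ 2 - 2%:R * s * t) + s * a3 + t * a1 + r * s * a1 + 2%:R * s * t by ring.
  vsolve.
have hB6 : vge v 4 (a6 + r * a4 + r ^+ 2 * a2 + r ^+ 3).
  have -> : a6 + r * a4 + r ^+ 2 * a2 + r ^+ 3 = (a6 + r * a4 + r ^+ 2 * a2 + r ^+ 3 - t * a3 - t ^+ 2 - r * t * a1) + t * a3 + t ^+ 2 + r * t * a1 by ring.
  vsolve.
apply: (vexact_not he).
have -> : a2 ^+ 2 - 3%:R * a4 = (a2 + 3%:R * r) ^+ 2 - 3%:R * (a4 + 2%:R * r * a2 + 3%:R * r ^+ 2) by ring.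
vsolve.
Qed.

Lemma strict_IVs a1 a2 a3 a4 a6 r s t :
  bnds (1,2,2,3,4) (WCoef a1 a2 a3 a4 a6) -> vexact v 4 (wb6 (WCoef a1 a2 a3 a4 a6)) ->
  vge v 0 r -> vge v 0 s -> vge v 0 t ->
  bnds (1,2,3,3,5) (wtr (WCoef a1 a2 a3 a4 a6) r s t) -> False.
Proof.
move=> Ha he hr hs ht Hb; case: (Ha) => /= ha1 ha2 ha3 ha4 ha6.
have [hr1 hs1 ht1] : [/\ vge v 1 r, vge v 1 s & vge v 1 t].
  apply: (strict_base (vge_le _ ha1) (vge_le _ ha2) (vge_le _ ha3) (vge_le _ ha4) (vge_le _ ha6) hr hs ht) => //.
  by apply: (bnds_le _ Hb).
case: Hb => /= H1 H2 H3 H4 H6.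
have hr2 : vge v 2 r.
  exact: (rge2 ha1 (vge_le _ ha2) (vge_le _ ha3) (vge_le _ ha4) (vge_le _ ha6) hr1 hs1 ht1
    (vge_le _ H2) (vge_le _ H3) (vge_le _ H6)).
apply: (vexact_not he); rewrite /wb6 /=.
have -> : a3 ^+ 2 + 4%:R * a6 = (a3 + r * a1 + 2%:R * t) ^+ 2 + 4%:R * (a6 + r * a4 + r ^+ 2 * a2 + r ^+ 3 - t * a3 - t ^+ 2 - r * t * a1) - 4%:R * r * a4 - 2%:R * r * a1 * a3
   - r ^+ 2 * a1 ^+ 2 - 4%:R * r ^+ 2 * a2 - 4%:R * r ^+ 3 by ring.
vsolve.
Qed.

Lemma strict_IIIs a1 a2 a3 a4 a6 r s t :
  bnds (1,2,3,3,5) (WCoef a1 a2 a3 a4 a6) -> vexact v 3 a4 ->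
  vge v 0 r -> vge v 0 s -> vge v 0 t ->
  bnds (1,2,3,4,5) (wtr (WCoef a1 a2 a3 a4 a6) r s t) -> False.
Proof.
move=> Ha he hr hs ht Hb; case: (Ha) => /= ha1 ha2 ha3 ha4 ha6.
have [hr1 hs1 ht1] : [/\ vge v 1 r, vge v 1 s & vge v 1 t].
  apply: (strict_base (vge_le _ ha1) (vge_le _ ha2) (vge_le _ ha3) (vge_le _ ha4) (vge_le _ ha6) hr hs ht) => //.
  by apply: (bnds_le _ Hb).
case: Hb => /= H1 H2 H3 H4 H6.
have hr2 : vge v 2 r.
  exact: (rge2 ha1 (vge_le _ ha2) (vge_le _ ha3) (vge_le _ ha4) (vge_le _ ha6) hr1 hs1 ht1
    (vge_le _ H2) (vge_le _ H3) (vge_le _ H6)).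
have ht2 : vge v 2 t.
  vroot 2%N 2%N 4%N.
  have -> : t ^+ 2 = a6 + r * a4 + r ^+ 2 * a2 + r ^+ 3 - t * a3 - r * t * a1 - (a6 + r * a4 + r ^+ 2 * a2 + r ^+ 3 - t * a3 - t ^+ 2 - r * t * a1) by ring.
  vsolve.
have ht3 : vge v 3 t.
  vroot 3%N 2%N 5%N.
  have -> : t ^+ 2 = a6 + r * a4 + r ^+ 2 * a2 + r ^+ 3 - t * a3 - r * t * a1 - (a6 + r * a4 + r ^+ 2 * a2 + r ^+ 3 - t * a3 - t ^+ 2 - r * t * a1) by ring.
  vsolve.
apply: (vexact_not he).
have -> : a4 = (a4 - s * a3 + 2%:R * r * a2 - (t + r * s) * a1 + 3%:R * r ^+ 2 - 2%:R * s * t) + s * a3 - 2%:R * r * a2 + t * a1 + r * s * a1 - 3%:R * r ^+ 2 + 2%:R * s * t by ring.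
vsolve.
Qed.

Lemma strict_IIs a1 a2 a3 a4 a6 r s t :
  bnds (1,2,3,4,5) (WCoef a1 a2 a3 a4 a6) -> vexact v 5 a6 ->
  vge v 0 r -> vge v 0 s -> vge v 0 t ->
  bnds (1,2,3,4,6) (wtr (WCoef a1 a2 a3 a4 a6) r s t) -> False.
Proof.
move=> Ha he hr hs ht Hb; case: (Ha) => /= ha1 ha2 ha3 ha4 ha6.
have [hr1 hs1 ht1] : [/\ vge v 1 r, vge v 1 s & vge v 1 t].
  apply: (strict_base (vge_le _ ha1) (vge_le _ ha2) (vge_le _ ha3) (vge_le _ ha4) (vge_le _ ha6) hr hs ht) => //.
  by apply: (bnds_le _ Hb).
case: Hb => /= H1 H2 H3 H4 H6.
have hr2 : vge v 2 r.
  exact: (rge2 ha1 (vge_le _ ha2) (vge_le _ ha3) (vge_le _ ha4) (vge_le _ ha6) hr1 hs1 ht1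
    (vge_le _ H2) (vge_le _ H3) (vge_le _ H6)).
have ht2 : vge v 2 t.
  vroot 2%N 2%N 4%N.
  have -> : t ^+ 2 = a6 + r * a4 + r ^+ 2 * a2 + r ^+ 3 - t * a3 - r * t * a1 - (a6 + r * a4 + r ^+ 2 * a2 + r ^+ 3 - t * a3 - t ^+ 2 - r * t * a1) by ring.
  vsolve.
have ht3 : vge v 3 t.
  vroot 3%N 2%N 5%N.
  have -> : t ^+ 2 = a6 + r * a4 + r ^+ 2 * a2 + r ^+ 3 - t * a3 - r * t * a1 - (a6 + r * a4 + r ^+ 2 * a2 + r ^+ 3 - t * a3 - t ^+ 2 - r * t * a1) by ring.
  vsolve.
apply: (vexact_not he).
have -> : a6 = (a6 + r * a4 + r ^+ 2 * a2 + r ^+ 3 - t * a3 - t ^+ 2 - r * t * a1) - r * a4 - r ^+ 2 * a2 - r ^+ 3 + t * a3 + t ^+ 2 + r * t * a1 by ring.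
vsolve.
Qed.


Lemma monic_int (n : nat) (x y : K) : x ^+ n.+1 = y ->
  (x != 0 -> v x < 0 -> vge v (v x * n%:Z) y) -> vge v 0 x.
Proof.
move=> e h; apply: NNPP => hx.
have x0 : x != 0 by apply/eqP => x0; apply: hx; left.
have xn : v x < 0 by apply: contra_notT hx; rewrite -leNgt => h0; right.
case: (h x0 xn) => [y0|].
  by move: (expf_eq0 x n.+1); rewrite e y0 eqxx (negbTE x0).
by rewrite -e vX //; lia.
Qed.

Definition integral (w : wcoef K) := bnds (0,0,0,0,0) w.

Lemma integralE w : integral w <-> integral_model v w.
Proof. by case: w => a1 a2 a3 a4 a6; split; case; split. Qed.

Lemma isoP_int w w' u r s t : isoP w w' u r s t -> integral w -> integral w' -> vge v 0 u ->
  [/\ vge v 0 r, vge v 0 s & vge v 0 t].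
Proof.
case=> u0 ->; case: w => a1 a2 a3 a4 a6 [] /= ha1 ha2 ha3 ha4 ha6 [] /=.
set R1 := a1 + 2%:R * s.
set R2 := a2 - s * a1 + 3%:R * r - s ^+ 2.
set R3 := a3 + r * a1 + 2%:R * t.
set R4 := a4 - s * a3 + 2%:R * r * a2 - (t + r * s) * a1 + 3%:R * r ^+ 2 - 2%:R * s * t.
set R6 := a6 + r * a4 + r ^+ 2 * a2 + r ^+ 3 - t * a3 - t ^+ 2 - r * t * a1.
move=> hA1 hA2 hA3 hA4 hA6 hu.
have ui : forall X (n : nat), vge v 0 (X / u ^+ n) -> vge v 0 X.
  move=> X n h; have := vge_mul h (vge_exp n hu); rewrite mul0r add0r divfK ?expf_neq0 //.
have h1 : vge v 0 R1 by apply: (ui R1 1); rewrite expr1.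
 have h2 := ui _ _ hA2; have h3 := ui _ _ hA3.
have h4 := ui _ _ hA4; have h6 := ui _ _ hA6.
have hr : vge v 0 r.
  have h4r : vge v 0 (4%:R * r).
    apply: (@monic_int 2 _ (- ((a1 ^+ 2 + 4%:R * a2) * (4%:R * r) ^+ 2
        + 8%:R * (2%:R * a4 + a1 * a3) * (4%:R * r) + 16%:R * (a3 ^+ 2 + 4%:R * a6 - (R3 ^+ 2 + 4%:R * R6))))).
      rewrite /R3 /R6; ring.
    move=> x0 xn; have hx : vge v (v (4%:R * r)) (4%:R * r) by right.
    vsolve.
  have h3r : vge v 0 (3%:R * r).
    apply: (@monic_int 3 _ (- ((a1 ^+ 2 + 4%:R * a2) * (3%:R * r) ^+ 3
        + 9%:R * (2%:R * a4 + a1 * a3) * (3%:R * r) ^+ 2 + 27%:R * (a3 ^+ 2 + 4%:R * a6) * (3%:R * r)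
        + 27%:R * ((a1 ^+ 2 * a6 + 4%:R * a2 * a6 - a1 * a3 * a4 + a2 * a3 ^+ 2 - a4 ^+ 2)
           - (R1 ^+ 2 * R6 + 4%:R * R2 * R6 - R1 * R3 * R4 + R2 * R3 ^+ 2 - R4 ^+ 2))))).
      rewrite /R1 /R2 /R3 /R4 /R6; ring.
    move=> x0 xn; have hx : vge v (v (3%:R * r)) (3%:R * r) by right.
    vsolve.
  have e : 4%:R * r - 3%:R * r = r by ring.
  rewrite -e; vsolve.
have hs : vge v 0 s.
  apply: (@monic_int 1 _ (- (a1 * s) + (a2 + 3%:R * r - R2))).
    rewrite /R2; ring.
  move=> x0 xn; have hx : vge v (v s) s by right.
  vsolve.
split => //.
apply: (@monic_int 1 _ (- ((a3 + r * a1) * t) + ((a6 + r * a4 + r ^+ 2 * a2 + r ^+ 3) - R6))).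
  rewrite /R6; ring.
move=> x0 xn; have hx : vge v (v t) t by right.
vsolve.
Qed.


Lemma disc_perturb b c d e f g :
  vge v 1 b -> vge v 2 c -> vge v 3 d -> vge v 2 e -> vge v 3 f -> vge v 4 g ->
  vge v 7 (disc_cubic (b + e) (c + f) (d + g) - disc_cubic b c d).
Proof.
move=> *.
have -> : disc_cubic (b + e) (c + f) (d + g) - disc_cubic b c d =
  (b ^+ 2 * (2%:R * c * f + f ^+ 2) + (2%:R * b * e + e ^+ 2) * (c + f) ^+ 2)
  - 4%:R * (3%:R * c ^+ 2 * f + 3%:R * c * f ^+ 2 + f ^+ 3)
  - 4%:R * ((3%:R * b ^+ 2 * e + 3%:R * b * e ^+ 2 + e ^+ 3) * (d + g) + b ^+ 3 * g)
  - 27%:R * (2%:R * d * g + g ^+ 2)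
  + 18%:R * (e * (c + f) * (d + g) + b * f * (d + g) + b * c * g) by rewrite /disc_cubic; ring.
vsolve.
Qed.

Lemma strict_I0In a1 a2 a3 a4 a6 r s t :
  bnds (1,1,2,2,3) (WCoef a1 a2 a3 a4 a6) -> vexact v 6 (wdelta (WCoef a1 a2 a3 a4 a6)) ->
  vge v 0 r -> vge v 0 s -> vge v 0 t ->
  bnds (1,1,2,2,3) (wtr (WCoef a1 a2 a3 a4 a6) r s t) ->
  vge v 7 (wdelta (wtr (WCoef a1 a2 a3 a4 a6) r s t)) -> False.
Proof.
move=> Ha he hr hs ht Hb Hd; case: (Ha) => /= ha1 ha2 ha3 ha4 ha6.
have [hr1 hs1 ht1] : [/\ vge v 1 r, vge v 1 s & vge v 1 t].
  apply: (strict_base (vge_le _ ha1) (vge_le _ ha2) (vge_le _ ha3) (vge_le _ ha4) (vge_le _ ha6) hr hs ht) => //.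
  by apply: (bnds_le _ Hb).
case: Hb => /= H1 H2 H3 H4 H6.
have ht2 : vge v 2 t.
  vroot 2%N 2%N 3%N.
  have -> : t ^+ 2 = a6 + r * a4 + r ^+ 2 * a2 + r ^+ 3 - t * a3 - r * t * a1 - (a6 + r * a4 + r ^+ 2 * a2 + r ^+ 3 - t * a3 - t ^+ 2 - r * t * a1) by ring.
  vsolve.
have hB2 : vge v 1 (a2 + 3%:R * r) by vsolve.
have hB4 : vge v 2 (a4 + 2%:R * r * a2 + 3%:R * r ^+ 2) by vsolve.
have hB6 : vge v 3 (a6 + r * a4 + r ^+ 2 * a2 + r ^+ 3) by vsolve.
have he2 : vge v 2 (- (s * a1) - s ^+ 2) by vsolve.
have he4 : vge v 3 (- (s * a3) - t * a1 - r * s * a1 - 2%:R * s * t) by vsolve.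
have he6 : vge v 4 (- (t * a3) - t ^+ 2 - r * t * a1) by vsolve.
have := disc_perturb hB2 hB4 hB6 he2 he4 he6.
have -> : disc_cubic (a2 + 3%:R * r + (- (s * a1) - s ^+ 2))
     (a4 + 2%:R * r * a2 + 3%:R * r ^+ 2 + (- (s * a3) - t * a1 - r * s * a1 - 2%:R * s * t))
     (a6 + r * a4 + r ^+ 2 * a2 + r ^+ 3 + (- (t * a3) - t ^+ 2 - r * t * a1))
   = wdelta (wtr (WCoef a1 a2 a3 a4 a6) r s t) by rewrite /wdelta /=; congr disc_cubic; ring.
have -> : disc_cubic (a2 + 3%:R * r) (a4 + 2%:R * r * a2 + 3%:R * r ^+ 2) (a6 + r * a4 + r ^+ 2 * a2 + r ^+ 3)
   = wdelta (WCoef a1 a2 a3 a4 a6) by rewrite /wdelta /disc_cubic /=; ring.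
move=> h; apply: (vexact_not he).
have -> : wdelta (WCoef a1 a2 a3 a4 a6) = wdelta (wtr (WCoef a1 a2 a3 a4 a6) r s t)
   - (wdelta (wtr (WCoef a1 a2 a3 a4 a6) r s t) - wdelta (WCoef a1 a2 a3 a4 a6)) by ring.
vsolve.
Qed.


Definition level (T : additive_kodaira) : nat :=
  match T with KII => 0 | KIII => 1 | KIV => 2 | KI0Star => 3 | KInStar_pos => 3
  | KIVStar => 4 | KIIIStar => 5 | KIIStar => 6 end.

Definition pbv (T : additive_kodaira) : int * int * int * int * int :=
  match T with KII => (1,1,1,1,1) | KIII => (1,1,1,1,2) | KIV => (1,1,1,2,2)
  | KI0Star => (1,1,2,2,3) | KInStar_pos => (1,1,2,2,3) | KIVStar => (1,2,2,3,4)
  | KIIIStar => (1,2,3,3,5) | KIIStar => (1,2,3,4,5) end.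

Definition kv (T : additive_kodaira) : int * int * int * int * int :=
  match T with KII => (1,1,1,1,2) | KIII => (1,1,1,2,2) | KIV => (1,1,2,2,3)
  | KI0Star => (1,2,2,3,4) | KInStar_pos => (1,2,2,3,4) | KIVStar => (1,2,3,3,5)
  | KIIIStar => (1,2,3,4,5) | KIIStar => (1,2,3,4,6) end.

Definition extra (T : additive_kodaira) (w : wcoef K) : Prop :=
  match T with
  | KII => vexact v 1 (wa6 w)
  | KIII => vexact v 1 (wa4 w)
  | KIV => vexact v 2 (wb6 w)
  | KI0Star => vexact v 6 (wdelta w)
  | KInStar_pos => vge v 7 (wdelta w) /\ vexact v 2 (wa2 w ^+ 2 - 3%:R * wa4 w)
  | KIVStar => vexact v 4 (wb6 w)
  | KIIIStar => vexact v 3 (wa4 w)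
  | KIIStar => vexact v 5 (wa6 w)
  end.

Definition pb T w := bnds (pbv T) w /\ extra T w.

Lemma strictT T w r s t : pb T w -> vge v 0 r -> vge v 0 s -> vge v 0 t ->
  bnds (kv T) (wtr w r s t) -> False.
Proof.
case: w => a1 a2 a3 a4 a6 [] hb he.
case: T hb he => /= hb he.
- exact: strict_II hb he.
- exact: strict_III hb he.
- exact: strict_IV hb he.
- exact: strict_I0 hb he.
- exact: strict_In hb (proj2 he).
- exact: strict_IVs hb he.
- exact: strict_IIIs hb he.
- exact: strict_IIs hb he.
Qed.

Lemma pbv_higher T1 T2 w : (level T1 < level T2)%N -> bnds (pbv T2) w -> bnds (kv T1) w.
Proof. by case: T1; case: T2 => //= _; apply: bnds_le. Qed.

Lemma kv_max T w : bnds (1,2,3,4,6) w -> bnds (kv T) w.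
Proof. by case: T => /=; apply: bnds_le. Qed.

Lemma pb_int T w : pb T w -> integral w.
Proof. by case: T; case=> h _; apply: bnds_le h. Qed.

Lemma isoP_unsc (w w' : wcoef K) u r s t : isoP w w' u r s t ->
  wtr w r s t = WCoef (u * wa1 w') (u ^+ 2 * wa2 w') (u ^+ 3 * wa3 w') (u ^+ 4 * wa4 w') (u ^+ 6 * wa6 w').
Proof.
case=> u0 ->; case: (wtr w r s t) => b1 b2 b3 b4 b6 /=.
by congr WCoef; rewrite mulrC divfK ?expf_neq0.
Qed.

Lemma bnds_sc (c : int) (k1 k2 k3 k4 k6 : int) u (w : wcoef K) : vge v c u -> bnds (k1,k2,k3,k4,k6) w ->
  bnds (c + k1, c * 2%:Z + k2, c * 3%:Z + k3, c * 4%:Z + k4, c * 6%:Z + k6)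
    (WCoef (u * wa1 w) (u ^+ 2 * wa2 w) (u ^+ 3 * wa3 w) (u ^+ 4 * wa4 w) (u ^+ 6 * wa6 w)).
Proof.
move=> hu [] h1 h2 h3 h4 h6; split => /=; try apply: vge_mul => //; apply: vge_exp => //.
Qed.

Lemma minimalP T w w' u r s t : pb T w -> wdisc w != 0 -> isoP w w' u r s t -> integral w' ->
  v (wdisc w) <= v (wdisc w').
Proof.
move=> hp d0 hiso hw'.
have u0 : u != 0 by case: hiso.
have [u1|u1] := classic (vge v 1 u).
  have hu0 : vge v 0 u by apply: vge_le u1.
  have [hr hs ht] := isoP_int hiso (pb_int hp) hw' hu0.
  exfalso; apply: (strictT hp hr hs ht); apply: kv_max.
  rewrite (isoP_unsc hiso); apply: bnds_le (bnds_sc u1 hw') => //.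
have vu : v u <= 0.
  have : ~ (1 <= v u) by move=> h; apply: u1; right.
  lia.
have e := isoP_disc hiso.
have d0' : wdisc w' != 0 by move: d0; rewrite e mulf_eq0 negb_or => /andP[].
rewrite e vM ?expf_neq0 // vX //; lia.
Qed.


Lemma disc_sc (u x y z : K) :
  disc_cubic (u ^+ 2 * x) (u ^+ 4 * y) (u ^+ 6 * z) = u ^+ 12 * disc_cubic x y z.
Proof. rewrite /disc_cubic; ring. Qed.

Lemma uniq_lt T1 T2 (n1 n2 : wcoef K) u r s t : pb T1 n1 -> pb T2 n2 -> isoP n1 n2 u r s t ->
  vge v 0 u -> ~ vge v 1 u -> (level T1 < level T2)%N -> False.
Proof.
move=> h1 h2 hiso hu0 hu1 hl.
have [hr hs ht] := isoP_int hiso (pb_int h1) (pb_int h2) hu0.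
apply: (strictT h1 hr hs ht); apply: (pbv_higher hl).
rewrite (isoP_unsc hiso); case: (h2) => hb _.
move: hb; case: (pbv T2) => [[[[k1 k2] k3] k4] k6] hb.
by apply: bnds_le (bnds_sc hu0 hb); rewrite /= !mul0r !add0r !lexx.
Qed.

Lemma uniq_I0In (n1 n2 : wcoef K) u r s t : pb KI0Star n1 -> pb KInStar_pos n2 -> isoP n1 n2 u r s t ->
  vge v 0 u -> ~ vge v 1 u -> False.
Proof.
move=> h1 h2 hiso hu0 hu1.
have [hr hs ht] := isoP_int hiso (pb_int h1) (pb_int h2) hu0.
case: h1 h2 => hb1 he1 [hb2 [hd2 _]].
move: hiso hb1 he1; case: n1 => a1 a2 a3 a4 a6 hiso hb1 he1.
apply: (strict_I0In hb1 he1 hr hs ht).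
  rewrite (isoP_unsc hiso); apply: bnds_le (bnds_sc hu0 hb2) => //.
rewrite (isoP_unsc hiso) /wdelta /= disc_sc.
have := vge_mul (vge_exp 12 hu0) hd2; by rewrite mul0r add0r.
Qed.

Lemma uniqP T1 T2 (n1 n2 : wcoef K) u r s t : pb T1 n1 -> pb T2 n2 -> isoP n1 n2 u r s t ->
  vge v 0 u -> ~ vge v 1 u -> T1 = T2.
Proof.
move=> h1 h2 hiso hu0 hu1.
have hiso' := isoP_sym hiso.
have hu0' := vge_inv_unit hu0 hu1.
have hu1' := vge_unit_inv hu0 hu1.
case: (ltngtP (level T1) (level T2)) => hl.
- by case: (uniq_lt h1 h2 hiso hu0 hu1 hl).
- by case: (uniq_lt h2 h1 hiso' hu0' hu1' hl).
- move: h1 h2 hiso hiso'; case: T1 hl; case: T2 => //= _ h1 h2 hiso hiso'.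
  + by case: (uniq_I0In h1 h2 hiso hu0 hu1).
  + by case: (uniq_I0In h2 h1 hiso' hu0' hu1').
Qed.


Lemma vge_vq q (i : nat) (k : int) a : (0 < i)%N ->
  (k - 1)%:~R < q * i%:R -> q * i%:R <= k%:~R ->
  (a = 0 \/ q <= vq v a i) <-> vge v k a.
Proof.
move=> hi h1 h2; rewrite /vq (rat_ceil (v a) hi h1 h2); done.
Qed.

Lemma vexact_vq q (i : nat) (k : int) a : (0 < i)%N ->
  (k - 1)%:~R < q * i%:R -> q * i%:R <= k%:~R ->
  (a <> 0 /\ vq v a i = q) <-> (q * i%:R = k%:~R /\ vexact v k a).
Proof.
move=> hi h1 h2; rewrite /vq (rat_eq (v a) hi h1 h2) /vexact; tauto.
Qed.

Lemma m_isE (w : wcoef K) q (k1 k2 k3 k4 k6 : int) : ratc q k1 k2 k3 k4 k6 ->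
  m_is v w q <-> bnds (k1,k2,k3,k4,k6) w /\
    ((q * 1%:R = k1%:~R /\ vexact v k1 (wa1 w)) \/ (q * 2%:R = k2%:~R /\ vexact v k2 (wa2 w)) \/
     (q * 3%:R = k3%:~R /\ vexact v k3 (wa3 w)) \/ (q * 4%:R = k4%:~R /\ vexact v k4 (wa4 w)) \/
     (q * 6%:R = k6%:~R /\ vexact v k6 (wa6 w))).
Proof.
move=> [[a1 b1] [a2 b2] [a3 b3] [a4 b4] [a6 b6]].
have E1 := vge_vq (wa1 w) (isT : (0 < 1)%N) a1 b1.
have E2 := vge_vq (wa2 w) (isT : (0 < 2)%N) a2 b2.
have E3 := vge_vq (wa3 w) (isT : (0 < 3)%N) a3 b3.
have E4 := vge_vq (wa4 w) (isT : (0 < 4)%N) a4 b4.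
have E6 := vge_vq (wa6 w) (isT : (0 < 6)%N) a6 b6.
have X1 := vexact_vq (wa1 w) (isT : (0 < 1)%N) a1 b1.
have X2 := vexact_vq (wa2 w) (isT : (0 < 2)%N) a2 b2.
have X3 := vexact_vq (wa3 w) (isT : (0 < 3)%N) a3 b3.
have X4 := vexact_vq (wa4 w) (isT : (0 < 4)%N) a4 b4.
have X6 := vexact_vq (wa6 w) (isT : (0 < 6)%N) a6 b6.
rewrite /m_is; split.
  case=> H [p [hp hq]]; split.
    split.
    - by apply/E1; apply: (H (wa1 w, 1%N)); rewrite !inE eqxx.
    - by apply/E2; apply: (H (wa2 w, 2%N)); rewrite !inE eqxx ?orbT.
    - by apply/E3; apply: (H (wa3 w, 3%N)); rewrite !inE eqxx ?orbT.
    - by apply/E4; apply: (H (wa4 w, 4%N)); rewrite !inE eqxx ?orbT.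
    - by apply/E6; apply: (H (wa6 w, 6%N)); rewrite !inE eqxx ?orbT.
  move: hp hq; rewrite !inE => /orP[/eqP->|/orP[/eqP->|/orP[/eqP->|/orP[/eqP->|/eqP->]]]] /= hq.
  - by left; apply/X1.
  - by right; left; apply/X2.
  - by right; right; left; apply/X3.
  - by right; right; right; left; apply/X4.
  - by right; right; right; right; apply/X6.
case=> [[h1 h2 h3 h4 h6] hx]; split.
  move=> p; rewrite !inE => /orP[/eqP->|/orP[/eqP->|/orP[/eqP->|/orP[/eqP->|/eqP->]]]] /=.
  - exact/E1.
  - exact/E2.
  - exact/E3.
  - exact/E4.
  - exact/E6.
case: hx => [/X1 h|[/X2 h|[/X3 h|[/X4 h|/X6 h]]]].
- by exists (wa1 w, 1%N); rewrite !inE eqxx.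
- by exists (wa2 w, 2%N); rewrite !inE eqxx ?orbT.
- by exists (wa3 w, 3%N); rewrite !inE eqxx ?orbT.
- by exists (wa4 w, 4%N); rewrite !inE eqxx ?orbT.
- by exists (wa6 w, 6%N); rewrite !inE eqxx ?orbT.
Qed.


Lemma vge_divpi pi (k j : int) (n : nat) x : pi != 0 -> v pi = 1 -> j = n%:Z -> vge v k x ->
  vge v (k - j) (x / pi ^+ n).
Proof.
move=> p0 vp -> [->|h]; first by rewrite mul0r; left.
have [->|x0] := eqVneq x 0; first by rewrite mul0r; left.
right; have pn : pi ^+ n != 0 by rewrite expf_neq0.
have e : v (pi ^+ n * (pi ^+ n)^-1) = v (pi ^+ n) + v ((pi ^+ n)^-1) by rewrite vM // invr_eq0.
rewrite mulfV // v1 vX // vp in e.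
rewrite vM // ?invr_eq0 //; lia.
Qed.

Lemma vge_pi pi : pi != 0 -> v pi = 1 -> vge v 1 pi.
Proof. by move=> _ h; right; rewrite h. Qed.

Lemma vge_unitl2 n c x : vge v 0 c -> ~ vge v 1 c -> vge v n (c ^+ 2 * x) -> vge v n x.
Proof. by move=> h0 h1 h; do 2 apply: (vge_unitl h0 h1); rewrite mulrA -expr2. Qed.

Lemma vge_unitl3 n c x : vge v 0 c -> ~ vge v 1 c -> vge v n (c ^+ 3 * x) -> vge v n x.
Proof. by move=> h0 h1 h; do 3 apply: (vge_unitl h0 h1); rewrite !mulrA -expr2 -exprSr. Qed.

Lemma P_root_s (Hp : perfect_residue_field v) (b c d : K) : vge v 0 b -> vge v 0 c -> vge v 0 d ->
  vge v 1 (disc_cubic b c d) ->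
  exists r, [/\ vge v 0 r, vge v 1 (r ^+ 3 + b * r ^+ 2 + c * r + d)
            & vge v 1 (3%:R * r ^+ 2 + 2%:R * b * r + c)].
Proof.
move=> hb hc hd hD.
have [c2|c2] := classic (vge v 1 (2%:R : K)).
  have [y [hy hy2]] := Hp 2%N isT c2 c hc.
  have hbcd : vge v 1 (b * c + d).
    vroot 1%N 2%N 1%N.
    have -> : (b * c + d) ^+ 2 = disc_cubic b c d
        + 2%:R * (2%:R * c ^+ 3 + 2%:R * b ^+ 3 * d + 14%:R * d ^+ 2 - 8%:R * b * c * d)
      by rewrite /disc_cubic; ring.
    vsolve.
  exists y; split => //.
    have -> : y ^+ 3 + b * y ^+ 2 + c * y + d = y * (y ^+ 2 - c) + b * (y ^+ 2 - c) + 2%:R * (c * y) + (b * c + d) by ring.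
    vsolve.
  have -> : 3%:R * y ^+ 2 + 2%:R * b * y + c = 3%:R * (y ^+ 2 - c) + 2%:R * (b * y) + 2%:R * (2%:R * c) by ring.
  vsolve.
have [c3|c3] := classic (vge v 1 (3%:R : K)).
  have c2' := char23 c3.
  have [b1|b1] := classic (vge v 1 b).
    have hc1 : vge v 1 c.
      vroot 1%N 3%N 1%N.
      apply: (vge_unitl (vge_nat 2) c2'); apply: (vge_unitl (vge_nat 2) c2').
      have -> : 2%:R * (2%:R * c ^+ 3) = b ^+ 2 * c ^+ 2 - 4%:R * b ^+ 3 * d - 3%:R * (9%:R * d ^+ 2 - 6%:R * b * c * d)
        - disc_cubic b c d by rewrite /disc_cubic; ring.
      vsolve.
    have [y [hy hy3]] := Hp 3%N isT c3 (- d) (vge_opp hd).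
    exists y; split => //.
      have -> : y ^+ 3 + b * y ^+ 2 + c * y + d = (y ^+ 3 - - d) + b * y ^+ 2 + c * y by ring.
      vsolve.
    vsolve.
  pose B := 2%:R * b.
  have hB0 : vge v 0 B by rewrite /B; vsolve.
  have hB1 : ~ vge v 1 B := vge_unit_mulr (vge_nat 2) c2' hb b1.
  have B0 : B != 0 := unit_ne0 hB1.
  have hBi := vge_inv_unit hB0 hB1.
  exists (- c / B); split.
  - vsolve.
  - apply: (vge_unitl3 hB0 hB1).
    have -> : B ^+ 3 * ((- c / B) ^+ 3 + b * (- c / B) ^+ 2 + c * (- c / B) + d) =
       - (2%:R * disc_cubic b c d + 3%:R * (3%:R * c ^+ 3 + 18%:R * d ^+ 2 - 12%:R * b * c * d)).
      by rewrite /disc_cubic /B; field; rewrite (unit_ne0 b1) (unit_ne0 c2').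
    vsolve.
  - have -> : 3%:R * (- c / B) ^+ 2 + 2%:R * b * (- c / B) + c = 3%:R * (- c / B) ^+ 2.
      by rewrite /B; field; rewrite (unit_ne0 b1) (unit_ne0 c2').
    vsolve.
have h30 : (3%:R : K) != 0 := unit_ne0 c3.
have h20 : (2%:R : K) != 0 := unit_ne0 c2.
have hi3 := vge_inv_unit (vge_nat 3) c3.
pose i3 := (3%:R : K)^-1.
pose p := c - b ^+ 2 * i3.
pose q := 2%:R * b ^+ 3 * i3 ^+ 3 - b * c * i3 + d.
have hp : vge v 0 p by rewrite /p; vsolve.
have hq : vge v 0 q by rewrite /q; vsolve.
have eD : disc_cubic b c d = - 4%:R * p ^+ 3 - 27%:R * q ^+ 2.
  by rewrite /disc_cubic /p /q /i3; field.
have [p1|p1] := classic (vge v 1 p).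
  have hq1 : vge v 1 q.
    vroot 1%N 2%N 1%N.
    apply: (vge_unitl3 (vge_nat 3) c3).
    have -> : 3%:R ^+ 3 * q ^+ 2 = - disc_cubic b c d - 4%:R * p ^+ 3 by rewrite eD; ring.
    vsolve.
  exists (- b * i3); split.
  - vsolve.
  - have -> : (- b * i3) ^+ 3 + b * (- b * i3) ^+ 2 + c * (- b * i3) + d = q.
      by rewrite /q /i3; field.
    done.
  - have -> : 3%:R * (- b * i3) ^+ 2 + 2%:R * b * (- b * i3) + c = p.
      by rewrite /p /i3; field.
    done.
pose P2 := 2%:R * p.
have hP0 : vge v 0 P2 by rewrite /P2; vsolve.
have hP1 : ~ vge v 1 P2 := vge_unit_mulr (vge_nat 2) c2 hp p1.
have P0 : P2 != 0 := unit_ne0 hP1.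
have hPi := vge_inv_unit hP0 hP1.
have nz : c * 3%:R - b ^+ 2 != 0.
  apply/eqP => e; move: P0; rewrite /P2 /p /i3.
  have -> : c - b ^+ 2 * 3%:R^-1 = (c * 3%:R - b ^+ 2) / 3%:R by field.
  by rewrite e mul0r mulr0 eqxx.
exists (- 3%:R * q / P2 - b * i3); split.
- vsolve.
- apply: (vge_unitl3 hP0 hP1).
  have -> : P2 ^+ 3 * ((- 3%:R * q / P2 - b * i3) ^+ 3 + b * (- 3%:R * q / P2 - b * i3) ^+ 2
      + c * (- 3%:R * q / P2 - b * i3) + d) = q * disc_cubic b c d.
    by rewrite eD /P2 /q /p /i3; field; rewrite h30 h20 nz.
  vsolve.
- apply: (vge_unitl2 hP0 hP1).
  have -> : P2 ^+ 2 * (3%:R * (- 3%:R * q / P2 - b * i3) ^+ 2 + 2%:R * b * (- 3%:R * q / P2 - b * i3) + c)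
      = - disc_cubic b c d.
    by rewrite eD /P2 /q /p /i3; field; rewrite h30 h20 nz.
  vsolve.
Qed.


Lemma P_root (Hp : perfect_residue_field v) (a2 a4 a6 : K) :
  vge v 1 a2 -> vge v 2 a4 -> vge v 3 a6 -> vge v 7 (disc_cubic a2 a4 a6) ->
  exists rho, [/\ vge v 1 rho, vge v 4 (rho ^+ 3 + a2 * rho ^+ 2 + a4 * rho + a6)
            & vge v 3 (3%:R * rho ^+ 2 + 2%:R * a2 * rho + a4)].
Proof.
move=> h2 h4 h6 hD.
case: (Hv) => _ _ [pi [p0' vp]]; have p0 : pi != 0 by apply/eqP.
have hpi := vge_pi p0 vp.
pose b := a2 / pi ^+ 1; pose c := a4 / pi ^+ 2; pose d := a6 / pi ^+ 3.
have hb : vge v 0 b by have := vge_divpi (j := 1) p0 vp erefl h2.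
have hc : vge v 0 c by have := vge_divpi (j := 2) p0 vp erefl h4.
have hd : vge v 0 d by have := vge_divpi (j := 3) p0 vp erefl h6.
have eb : a2 = pi * b by rewrite /b expr1 mulrC divfK.
have ec : a4 = pi ^+ 2 * c by rewrite /c mulrC divfK // expf_neq0.
have ed : a6 = pi ^+ 3 * d by rewrite /d mulrC divfK // expf_neq0.
have hD' : vge v 1 (disc_cubic b c d).
  have := vge_divpi (j := 6) p0 vp erefl hD.
  have -> : disc_cubic a2 a4 a6 / pi ^+ 6 = disc_cubic b c d.
    by rewrite eb ec ed /disc_cubic; field.
  done.
have [r [hr hP hP']] := P_root_s Hp hb hc hd hD'.
exists (pi * r); split.
- have := vge_mul hpi hr; by rewrite addr0.
- have -> : (pi * r) ^+ 3 + a2 * (pi * r) ^+ 2 + a4 * (pi * r) + a6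
      = pi ^+ 3 * (r ^+ 3 + b * r ^+ 2 + c * r + d) by rewrite eb ec ed; ring.
  vsolve.
- have -> : 3%:R * (pi * r) ^+ 2 + 2%:R * a2 * (pi * r) + a4
      = pi ^+ 2 * (3%:R * r ^+ 2 + 2%:R * b * r + c) by rewrite eb ec; ring.
  vsolve.
Qed.

Lemma Q_root (Hp : perfect_residue_field v) (a3 a6 : K) :
  vge v 2 a3 -> vge v 4 a6 -> vge v 5 (a3 ^+ 2 + 4%:R * a6) ->
  exists sigma, [/\ vge v 2 sigma, vge v 5 (sigma ^+ 2 + a3 * sigma - a6)
            & vge v 3 (2%:R * sigma + a3)].
Proof.
move=> h3 h6 hb.
case: (Hv) => _ _ [pi [p0' vp]]; have p0 : pi != 0 by apply/eqP.
have hpi := vge_pi p0 vp.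
have [c2|c2] := classic (vge v 1 (2%:R : K)).
  have h3' : vge v 3 a3.
    vroot 3%N 2%N 5%N.
    have -> : a3 ^+ 2 = (a3 ^+ 2 + 4%:R * a6) - 2%:R * (2%:R * a6) by ring.
    vsolve.
  pose d := a6 / pi ^+ 4.
  have hd : vge v 0 d by have := vge_divpi (j := 4) p0 vp erefl h6.
  have ed : a6 = pi ^+ 4 * d by rewrite /d mulrC divfK // expf_neq0.
  have [y [hy hy2]] := Hp 2%N isT c2 d hd.
  exists (pi ^+ 2 * y); split.
  - vsolve.
  - have -> : (pi ^+ 2 * y) ^+ 2 + a3 * (pi ^+ 2 * y) - a6 = pi ^+ 4 * (y ^+ 2 - d) + a3 * (pi ^+ 2 * y)
      by rewrite ed; ring.
    vsolve.
  - vsolve.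
have h20 : (2%:R : K) != 0 := unit_ne0 c2.
have hi2 := vge_inv_unit (vge_nat 2) c2.
exists (- a3 * (2%:R : K)^-1); split.
- vsolve.
- have -> : (- a3 * 2%:R^-1) ^+ 2 + a3 * (- a3 * 2%:R^-1) - a6 = - (a3 ^+ 2 + 4%:R * a6) * (2%:R^-1) ^+ 2
    by field.
  vsolve.
- have -> : 2%:R * (- a3 * 2%:R^-1) + a3 = 0 by field.
  by left.
Qed.


Lemma mult_disc (a2 a4 a6 rho : K) : vge v 1 a2 -> vge v 1 rho ->
  vge v 4 (rho ^+ 3 + a2 * rho ^+ 2 + a4 * rho + a6) ->
  vge v 3 (3%:R * rho ^+ 2 + 2%:R * a2 * rho + a4) -> vge v 7 (disc_cubic a2 a4 a6).
Proof.
move=> h2 hr hF hF'.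
have hB : vge v 1 (a2 + 3%:R * rho) by vsolve.
have -> : disc_cubic a2 a4 a6 = disc_cubic (a2 + 3%:R * rho) (3%:R * rho ^+ 2 + 2%:R * a2 * rho + a4)
   (rho ^+ 3 + a2 * rho ^+ 2 + a4 * rho + a6) by rewrite /disc_cubic; ring.
rewrite /disc_cubic; vsolve.
Qed.

Lemma vexact_lt n m x : vexact v n x -> n < m -> ~ vge v m x.
Proof. move=> he hnm h; apply: (vexact_not he); apply: vge_le h; lia. Qed.

Lemma pb_tate (Hp : perfect_residue_field v) T w : pb T w -> tate_cond v T w.
Proof.
case: w => a1 a2 a3 a4 a6 [hb he]; case: T hb he => /= [] [] /= h1 h2 h3 h4 h6 he.
- split; last exact: (vexact_lt he).
  by split => //; rewrite /wb2 /=; vsolve.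
- split => //; first by split => //; rewrite /wb2 /=; vsolve.
  rewrite /wb8 /= => hb8; apply: (vexact_lt he (isT : (1 < 2 :> int))).
  vroot 2%N 2%N 3%N.
  have -> : a4 ^+ 2 = (a1 ^+ 2 * a6 + 4%:R * a2 * a6 - a1 * a3 * a4 + a2 * a3 ^+ 2) -
     (a1 ^+ 2 * a6 + 4%:R * a2 * a6 - a1 * a3 * a4 + a2 * a3 ^+ 2 - a4 ^+ 2) by ring.
  vsolve.
- split => //; first by split => //; rewrite /wb2 /=; vsolve.
  + by rewrite /wb8 /=; vsolve.
  + exact: (vexact_lt he).
- split => //; case=> rho [hr hF hF'].
  apply: (vexact_lt he (isT : (6 < 7 :> int))); rewrite /wdelta /=.
  exact: (mult_disc h2 hr hF hF').
- case: he => hd he; split => //.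
    exact: (P_root Hp h2 h4 h6 hd).
  case=> rho [hr hF hF' hT]; apply: (vexact_lt he (isT : (2 < 3 :> int))).
  rewrite /wF' /= in hF'.
  have -> : a2 ^+ 2 - 3%:R * a4 = (a2 + 3%:R * rho) ^+ 2 - 3%:R * (3%:R * rho ^+ 2 + 2%:R * a2 * rho + a4) by ring.
  vsolve.
- split => //; split => //; case=> sigma [hs hG hG'].
  apply: (vexact_lt he (isT : (4 < 5 :> int))); rewrite /wb6 /=; rewrite /wG /= in hG.
  have -> : a3 ^+ 2 + 4%:R * a6 = (2%:R * sigma + a3) ^+ 2 - 4%:R * (sigma ^+ 2 + a3 * sigma - a6) by ring.
  vsolve.
- split => //; split => //; exact: (vexact_lt he).
- split => //; split => //; exact: (vexact_lt he).
Qed.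


Lemma isoP_one (w : wcoef K) r s t : isoP w (wtr w r s t) 1 r s t.
Proof.
split; first exact: oner_neq0.
by case: (wtr w r s t) => *; rewrite /wsc /= !expr1n !divr1.
Qed.

Lemma s_norm (Hp : perfect_residue_field v) (a1 a2 : K) : vge v 0 a1 -> vge v 0 a2 ->
  vge v 1 (a1 ^+ 2 + 4%:R * a2) ->
  exists s, [/\ vge v 0 s, vge v 1 (a1 + 2%:R * s) & vge v 1 (a2 - s * a1 - s ^+ 2)].
Proof.
move=> h1 h2 hb.
have [c2|c2] := classic (vge v 1 (2%:R : K)).
  have h1' : vge v 1 a1.
    vroot 1%N 2%N 1%N.
    have -> : a1 ^+ 2 = (a1 ^+ 2 + 4%:R * a2) - 2%:R * (2%:R * a2) by ring.
    vsolve.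
  have [y [hy hy2]] := Hp 2%N isT c2 a2 h2.
  exists y; split => //; first by vsolve.
  have -> : a2 - y * a1 - y ^+ 2 = - (y ^+ 2 - a2) - y * a1 by ring.
  vsolve.
have h20 : (2%:R : K) != 0 := unit_ne0 c2.
have hi2 := vge_inv_unit (vge_nat 2) c2.
exists (- a1 * 2%:R^-1); split.
- vsolve.
- have -> : a1 + 2%:R * (- a1 * 2%:R^-1) = 0 by field.
  by left.
- have -> : a2 - - a1 * 2%:R^-1 * a1 - (- a1 * 2%:R^-1) ^+ 2 = (a1 ^+ 2 + 4%:R * a2) * (2%:R^-1) ^+ 2
    by field.
  vsolve.
Qed.

Lemma tate_pb (Hp : perfect_residue_field v) T (w : wcoef K) : integral w -> tate_cond v T w ->
  exists w' u r s t, isoP w w' u r s t /\ pb T w'.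
Proof.
case: w => a1 a2 a3 a4 a6 [] /= h1 h2 h3 h4 h6.
have triv : forall w : wcoef K, pb T w -> exists w' u r s t, isoP w w' u r s t /\ pb T w'.
  by move=> w hw; exists w, 1, 0, 0, 0; split => //; apply: isoP_refl.
case: T triv => triv; rewrite /tate_cond.
- case=> [[/= g3 g4 g6 gb] ng].
  have [s [hs hA1 hA2]] := s_norm Hp h1 h2 gb.
  exists (wtr (WCoef a1 a2 a3 a4 a6) 0 s 0), 1, 0, s, 0; split; first exact: isoP_one.
  have -> : wtr (WCoef a1 a2 a3 a4 a6) 0 s 0 = WCoef (a1 + 2%:R * s) (a2 - s * a1 - s ^+ 2) a3 (a4 - s * a3) a6
    by rewrite /wtr /=; congr WCoef; ring.
  split; first by split => //=; vsolve.
  by apply: vexact_intro => //; move=> h; apply: ng; apply: vge_le h.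
- case=> [[/= g3 g4 g6 gb] g62 ng].
  have [s [hs hA1 hA2]] := s_norm Hp h1 h2 gb.
  exists (wtr (WCoef a1 a2 a3 a4 a6) 0 s 0), 1, 0, s, 0; split; first exact: isoP_one.
  have -> : wtr (WCoef a1 a2 a3 a4 a6) 0 s 0 = WCoef (a1 + 2%:R * s) (a2 - s * a1 - s ^+ 2) a3 (a4 - s * a3) a6
    by rewrite /wtr /=; congr WCoef; ring.
  split; first by split => //=; vsolve.
  apply: vexact_intro => /=; first by vsolve.
  move=> h; apply: ng; rewrite /wb8 /=.
  have -> : a1 ^+ 2 * a6 + 4%:R * a2 * a6 - a1 * a3 * a4 + a2 * a3 ^+ 2 - a4 ^+ 2 =
    (a1 + 2%:R * s) ^+ 2 * a6 + 4%:R * (a2 - s * a1 - s ^+ 2) * a6 - (a1 + 2%:R * s) * a3 * (a4 - s * a3)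
    + (a2 - s * a1 - s ^+ 2) * a3 ^+ 2 - (a4 - s * a3) ^+ 2 by ring.
  vsolve.
- case=> [[/= g3 g4 g6 gb] g62 g8 ng].
  have [s [hs hA1 hA2]] := s_norm Hp h1 h2 gb.
  exists (wtr (WCoef a1 a2 a3 a4 a6) 0 s 0), 1, 0, s, 0; split; first exact: isoP_one.
  have -> : wtr (WCoef a1 a2 a3 a4 a6) 0 s 0 = WCoef (a1 + 2%:R * s) (a2 - s * a1 - s ^+ 2) a3 (a4 - s * a3) a6
    by rewrite /wtr /=; congr WCoef; ring.
  rewrite /wb8 /= in g8.
  have hA4 : vge v 2 (a4 - s * a3).
    vroot 2%N 2%N 3%N.
    have -> : (a4 - s * a3) ^+ 2 = ((a1 + 2%:R * s) ^+ 2 * a6 + 4%:R * (a2 - s * a1 - s ^+ 2) * a6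
       - (a1 + 2%:R * s) * a3 * (a4 - s * a3) + (a2 - s * a1 - s ^+ 2) * a3 ^+ 2)
       - (a1 ^+ 2 * a6 + 4%:R * a2 * a6 - a1 * a3 * a4 + a2 * a3 ^+ 2 - a4 ^+ 2) by ring.
    vsolve.
  split; first by split => //=; vsolve.
  apply: vexact_intro => //; rewrite /wb6 /=; vsolve.
- case=> [[/= g1 g2 g3 g4 g6] ng]; apply: triv; split => //=.
  apply: vexact_intro.
    by rewrite /wdelta /disc_cubic /=; vsolve.
  move=> hd; apply: ng; exact: (P_root Hp g2 g4 g6 hd).
- case=> [[/= g1 g2 g3 g4 g6] [rho [hr hF hF']] ng]; apply: triv; split => //=.
  split; first exact: (mult_disc g2 hr hF hF').
  apply: vexact_intro; first by vsolve.
  move=> hd; apply: ng; exists rho; split => //.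
  rewrite /wF' /= in hF'.
  vroot 2%N 2%N 3%N.
  have -> : (a2 + 3%:R * rho) ^+ 2 = (a2 ^+ 2 - 3%:R * a4) + 3%:R * (3%:R * rho ^+ 2 + 2%:R * a2 * rho + a4) by ring.
  vsolve.
- case=> g1 [/= g2 g3 g4 g6 ng]; apply: triv; split => //=.
  apply: vexact_intro; rewrite /wb6 /=; first by vsolve.
  move=> hd; apply: ng; exact: (Q_root Hp g3 g6 hd).
- case=> g1 [/= g2 g3 g4 g6 ng]; apply: triv; split => //=.
  by apply: vexact_intro.
- case=> g1 [/= g2 g3 g4 g6 ng]; apply: triv; split => //=.
  by apply: vexact_intro.
Qed.


Ltac mis_get w R :=
  let M := fresh "M" in
  have M := (m_isE w R); rewrite /= in M.

Ltac kill := let e := fresh "e" in move=> [/eqP e _]; vm_compute in e; discriminate.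

Lemma paper_pb T (w : wcoef K) : paper_cond v T w <-> pb T w.
Proof.
case: w => a1 a2 a3 a4 a6; case: T; rewrite /paper_cond /pb /extra.
- mis_get (WCoef a1 a2 a3 a4 a6) ratc16.
  rewrite M /=; split => [[hb D]|[hb he]]; split => //.
    by case: D => [|[|[|[|[_ h]]]]] //; kill.
  by right; right; right; right; split => //; apply/eqP; vm_compute.
- mis_get (WCoef a1 a2 a3 a4 a6) ratc14.
  rewrite M /=; split => [[hb D]|[hb he]]; split => //.
    by case: D => [|[|[|[[_ h]|]]]] //; kill.
  by right; right; right; left; split => //; apply/eqP; vm_compute.
- mis_get (WCoef a1 a2 a3 a4 a6) ratc13.
  rewrite M /=; split => [[[hb D] he]|[hb he]] //.
  split => //; split => //.
  case: (hb) => /= h1 h2 h3 h4 h6.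
  have [g3|g3] := classic (vge v 2 a3).
    have [g6|g6] := classic (vge v 3 a6).
      exfalso; apply: (vexact_lt he (isT : (2 < 3 :> int))); rewrite /wb6 /=; vsolve.
    by right; right; right; right; split; [apply/eqP; vm_compute | apply: vexact_intro].
  by right; right; left; split; [apply/eqP; vm_compute | apply: vexact_intro].
- mis_get (WCoef a1 a2 a3 a4 a6) ratc12.
  rewrite M /=; split => [[[hb D] he]|[hb he]] //.
  split => //; split => //.
  case: (hb) => /= h1 h2 h3 h4 h6.
  have [g2|g2] := classic (vge v 2 a2); last by right; left; split; [apply/eqP; vm_compute | apply: vexact_intro].
  have [g4|g4] := classic (vge v 3 a4); last by right; right; right; left; split; [apply/eqP; vm_compute | apply: vexact_intro].
  have [g6|g6] := classic (vge v 4 a6); last by right; right; right; right; split; [apply/eqP; vm_compute | apply: vexact_intro].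
  exfalso; apply: (vexact_lt he (isT : (6 < 7 :> int))); rewrite /wdelta /disc_cubic /=; vsolve.
- mis_get (WCoef a1 a2 a3 a4 a6) ratc12.
  split => [[/M [hb D] hd he]|[hb [hd he]]] //.
  split => //; apply/M; split => //.
  case: (hb) => /= h1 h2 h3 h4 h6.
  have [g2|g2] := classic (vge v 2 a2); last by right; left; split; [apply/eqP; vm_compute | apply: vexact_intro].
  have [g4|g4] := classic (vge v 3 a4); last by right; right; right; left; split; [apply/eqP; vm_compute | apply: vexact_intro].
  exfalso; apply: (vexact_lt he (isT : (2 < 3 :> int))); vsolve.
- mis_get (WCoef a1 a2 a3 a4 a6) ratc23.
  rewrite M /=; split => [[[hb D] he]|[hb he]] //.
  split => //; split => //.
  case: (hb) => /= h1 h2 h3 h4 h6.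
  have [g3|g3] := classic (vge v 3 a3); last by right; right; left; split; [apply/eqP; vm_compute | apply: vexact_intro].
  have [g6|g6] := classic (vge v 5 a6); last by right; right; right; right; split; [apply/eqP; vm_compute | apply: vexact_intro].
  exfalso; apply: (vexact_lt he (isT : (4 < 5 :> int))); rewrite /wb6 /=; vsolve.
- mis_get (WCoef a1 a2 a3 a4 a6) ratc34.
  rewrite M /=; split => [[hb D]|[hb he]]; split => //.
    by case: D => [|[|[|[[_ h]|]]]] //; kill.
  by right; right; right; left; split => //; apply/eqP; vm_compute.
- mis_get (WCoef a1 a2 a3 a4 a6) ratc56.
  rewrite M /=; split => [[hb D]|[hb he]]; split => //.
    by case: D => [|[|[|[|[_ h]]]]] //; kill.
  by right; right; right; right; split => //; apply/eqP; vm_compute.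
Qed.


Lemma wiso_isoP (w w' : wcoef K) : wiso w w' -> exists u r s t, isoP w w' u r s t.
Proof. by move/wisoE. Qed.

Lemma isoP_wiso (w w' : wcoef K) u r s t : isoP w w' u r s t -> wiso w w'.
Proof. by move=> h; apply/wisoE; exists u, r, s, t. Qed.

Lemma disc_ne0 (w w' : wcoef K) u r s t : isoP w w' u r s t -> wdisc w != 0 -> wdisc w' != 0.
Proof. by move=> h; rewrite (isoP_disc h) mulf_eq0 negb_or => /andP[]. Qed.

Lemma minimal_of_pb T (w0 w : wcoef K) u r s t : wdisc w0 != 0 -> isoP w0 w u r s t -> pb T w ->
  minimal_model v w0 w.
Proof.
move=> d0 hiso hp.
have dw := disc_ne0 hiso d0.
split; first exact: isoP_wiso hiso.
  by apply/integralE; apply: pb_int hp.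
move=> w' /wiso_isoP [u' [r' [s' [t' h']]]] /integralE hw'.
exact: (minimalP hp dw (isoP_trans (isoP_sym hiso) h') hw').
Qed.

Lemma unit_of_eq (w w' : wcoef K) u r s t : isoP w w' u r s t -> wdisc w != 0 ->
  v (wdisc w) = v (wdisc w') -> vge v 0 u /\ ~ vge v 1 u.
Proof.
move=> hiso d0 e.
have u0 : u != 0 by case: hiso.
have d0' := disc_ne0 hiso d0.
move: e; rewrite (isoP_disc hiso) vM ?expf_neq0 // vX // => e.
have vu : v u = 0 by lia.
split; first by right; rewrite vu.
by case=> [/eqP|]; [rewrite (negbTE u0) | rewrite vu].
Qed.

Lemma part1 (Hp : perfect_residue_field v) (w0 : wcoef K) : wdisc w0 != 0 -> additive_reduction v w0 ->
  exists w, minimal_model v w0 w /\ (forall T, kodaira_type v w0 T -> paper_cond v T w).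
Proof.
move=> d0 hadd.
have [[T [w1 [hi1 hint1 ht1]]]|nT] := classic (exists T, kodaira_type v w0 T); last first.
  case: hadd => w [hm _ _]; exists w; split => // T hT; exfalso; apply: nT; exists T; exact: hT.
have [u1 [r1 [s1 [t1 hi1']]]] := wiso_isoP hi1.
have [w2 [u2 [r2 [s2 [t2 [hi2 hp2]]]]]] := tate_pb Hp (proj2 (integralE w1) hint1) ht1.
have hi := isoP_trans hi1' hi2.
exists w2; split; first exact: minimal_of_pb d0 hi hp2.
move=> T' [w1' [hi1b hint1b ht1b]].
have [u1' [r1' [s1' [t1' hi1b']]]] := wiso_isoP hi1b.
have [w2' [u2' [r2' [s2' [t2' [hi2' hp2']]]]]] := tate_pb Hp (proj2 (integralE w1') hint1b) ht1b.
have hi' := isoP_trans hi1b' hi2'.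
have h22 := isoP_trans (isoP_sym hi) hi'.
have d2 := disc_ne0 hi d0.
have d2' := disc_ne0 hi' d0.
have le1 := minimalP hp2 d2 h22 (pb_int hp2').
have le2 := minimalP hp2' d2' (isoP_sym h22) (pb_int hp2).
have e : v (wdisc w2) = v (wdisc w2') by apply/eqP; rewrite eq_le le1 le2.
have [hu0 hu1] := unit_of_eq h22 d2 e.
have eT := uniqP hp2 hp2' h22 hu0 hu1.
by rewrite -eT; apply/paper_pb.
Qed.

Lemma part2 (Hp : perfect_residue_field v) (w : wcoef K) : wdisc w != 0 ->
  forall T, paper_cond v T w -> minimal_model v w w /\ kodaira_type v w T.
Proof.
move=> d0 T /paper_pb hp; split; first exact: (minimal_of_pb d0 (isoP_refl w) hp).
exists w; split; first exact: isoP_wiso (isoP_refl w).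
  by apply/integralE; apply: pb_int hp.
exact: pb_tate.
Qed.

End Val.

Theorem theorem1 (K : fieldType) (v : K -> int)
  (Hv : normalized_discrete_valuation v)
  (Hcomplete : complete_valuation v)
  (Hperfect : perfect_residue_field v) :
  (forall w0 : wcoef K, wdisc w0 <> 0 -> additive_reduction v w0 ->
     exists w : wcoef K, minimal_model v w0 w /\
       (forall T : additive_kodaira, kodaira_type v w0 T -> paper_cond v T w))
  /\
  (forall w : wcoef K, wdisc w <> 0 ->
     forall T : additive_kodaira, paper_cond v T w ->
       minimal_model v w w /\ kodaira_type v w T).
Proof.
split.
  by move=> w0 d0; apply: (part1 Hv Hperfect); apply/eqP.
by move=> w d0; apply: (part2 Hv Hperfect); apply/eqP.
Qed.
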